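(* Let $X$ be a Fréchet space and $(\|\cdot\|_k)_{k\ge 1}$ an associated increasing family of seminorms (i.e. $\|x\|_k\le\|x\|_{k+1}$ for all $x\in X$, $k\ge1$). Equip $X$ with the metric \[ d_X(x,y)=\sum_{k=1}^{\infty}2^{-k}\min\bigl(1,\|x-y\|_k\bigr). \] A linear operator $T:X\to X$ is an isometry for $d_X$ (i.e. $d_X(Tx,Ty)=d_X(x,y)$ for all $x,y\in X$) if and only if $\|Tx\|_k=\|x\|_k$ for all $x\in X$ and all $k\in\mathbb{N}$. *)

(* Defs.v *)
From HB Require Import structures.
From mathcomp Require Import all_boot all_order all_algebra.
From mathcomp Require Import all_classical all_reals all_analysis.
Set Implicit Arguments. Unset Strict Implicit. Unset Printing Implicit Defensive.
Import Order.TTheory GRing.Theory Num.Theory.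
Local Open Scope ring_scope.
Local Open Scope classical_set_scope.

Definition is_seminorm (R : realType) (V : lmodType R) (p : V -> R) : Prop :=
  (forall x y : V, p (x + y) <= p x + p y) /\
  (forall (a : R) (x : V), p (a *: x) = `|a| * p x).

(* The metric d_X(x,y) = sum_{k>=1} 2^-k min(1, ||x-y||_k), as the limit of
   partial sums (the index 0 of the family p is unused). *)
Definition frechet_dist (R : realType) (V : lmodType R) (p : nat -> V -> R)
  (x y : V) : R :=
  limn (fun n => \sum_(1 <= k < n) (2 ^- k * Num.min 1 (p k (x - y)))).

(* (X, (||.||_k)_{k>=1}) is a Frechet space with an increasing family of
   seminorms: each ||.||_k is a seminorm, the family is increasing and
   separating (so d_X is a metric inducing the locally convex topology),
   and X is complete for d_X. *)
Definition increasing_frechet_seminorms (R : realType) (V : lmodType R)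
  (p : nat -> V -> R) : Prop :=
  (forall k, (1 <= k)%N -> is_seminorm (p k)) /\
  (forall k x, (1 <= k)%N -> p k x <= p k.+1 x) /\
  (forall x, (forall k, (1 <= k)%N -> p k x = 0) -> x = 0) /\
  (forall u : nat -> V,
     (forall e : R, 0 < e -> exists N, forall m n, (N <= m)%N -> (N <= n)%N ->
        frechet_dist p (u m) (u n) < e) ->
     exists l : V, frechet_dist p (u n) l @[n --> \oo] --> 0).

(* Main.v *)
Require Import Defs.
From HB Require Import structures.
From mathcomp Require Import all_boot all_order all_algebra.
From mathcomp Require Import all_classical all_reals all_analysis.
From mathcomp Require Import ring lra.
Import Order.TTheory GRing.Theory Num.Theory numFieldNormedType.Exports.
Local Open Scope ring_scope.

Section H.
Variable R : realType.
Local Open Scope classical_set_scope.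

Definition Fs (c : nat -> R) (t : R) (n : nat) : R :=
  \sum_(1 <= k < n) (2 ^- k * Num.min 1 (t * c k)).

Lemma geo n : \sum_(1 <= k < n.+1) (2:R) ^- k + 2 ^- n = 1.
Proof.
elim: n => [|n IH]; first by rewrite big_geq // add0r expr0 invr1.
rewrite big_nat_recr //= -addrA -[RHS]IH; congr (_ + _).
rewrite exprS invfM; set y := (2:R) ^- n; by field.

Qed.

Lemma geo_le n : \sum_(1 <= k < n) (2:R) ^- k <= 1.
Proof.
case: n => [|n]; first by rewrite big_geq.
by rewrite -[X in _ <= X](geo n) lerDl invr_ge0 exprn_ge0.
Qed.

Lemma smin (s x : R) : 0 < s -> s * Num.min 1 (s^-1 * x) = Num.min s x.
Proof. by move=> s0; rewrite minr_pMr ?ltW // mulr1 mulrA mulfV ?gt_eqF // mul1r. Qed.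

Lemma Fs_cvg (c : nat -> R) (t : R) : 0 <= t -> (forall k, 0 <= c k) -> cvgn (Fs c t).
Proof.
move=> t0 c0.
have term k : 0 <= 2 ^- k * Num.min 1 (t * c k) <= 2 ^- k.
  have h2 : 0 <= (2:R) ^- k by rewrite invr_ge0 exprn_ge0.
  rewrite mulr_ge0 //= ?le_min ?ler01 ?mulr_ge0 //.
  by rewrite ler_piMr // ge_min lexx.
apply: nondecreasing_is_cvgn.
  apply/nondecreasing_seqP => n; rewrite /Fs.
  case: n => [|n]; first by rewrite !big_geq.
  by rewrite [X in _ <= X]big_nat_recr //= lerDl; case/andP: (term n.+1).
exists 1 => _ [n _ <-]; rewrite /Fs.
apply: le_trans (geo_le n); apply: ler_sum => k _; by case/andP: (term k).
Qed.

Lemma Dprop (s1 s2 x : R) : s1 <= s2 ->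
  0 <= Num.min s2 x - Num.min s1 x <= s2 - s1.
Proof. move=> h; rewrite !minElt; case: (ltP s2 x); case: (ltP s1 x) => *; apply/andP; split; lra. Qed.

Lemma Dzero (s1 s2 x : R) : s1 <= s2 -> x <= s1 -> Num.min s2 x - Num.min s1 x = 0.
Proof. move=> h1 h2; rewrite !minElt; case: (ltP s2 x); case: (ltP s1 x) => *; lra. Qed.

Lemma Dfull (s1 s2 x : R) : s1 <= s2 -> s2 <= x -> Num.min s2 x - Num.min s1 x = s2 - s1.
Proof. move=> h1 h2; rewrite !minElt; case: (ltP s2 x); case: (ltP s1 x) => *; lra. Qed.

Lemma sum_ge_term (e : nat -> R) k0 n : (1 <= k0)%N -> (k0 < n)%N ->
  (forall k, (1 <= k)%N -> 0 <= e k) -> e k0 <= \sum_(1 <= k < n) e k.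
Proof.
move=> h1 h2 he.
rewrite (big_cat_nat _ (n:=k0)) ?(ltnW h2) //= [X in _ + X]big_ltn //.
have pos m p : (1 <= m)%N -> 0 <= \sum_(m <= k < p) e k.
  move=> hm; rewrite big_nat_cond; apply: sumr_ge0 => i /andP[/andP[hi _] _].
  by apply: he; apply: leq_trans hi.
have := pos 1%N k0 isT; have := pos k0.+1 n isT; lra.
Qed.

Lemma key (a b : nat -> R) (ha : forall k, 0 <= a k) (hb : forall k, 0 <= b k)
  (ma : forall i j, (1 <= i)%N -> (i <= j)%N -> a i <= a j)
  (mb : forall i j, (1 <= i)%N -> (i <= j)%N -> b i <= b j)
  (heq : forall t, 0 < t -> limn (Fs a t) = limn (Fs b t)) k0 (hk0 : (1 <= k0)%N) :
  ~ (a k0 < b k0).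
Proof.
move=> lt.
set s1 := (a k0 + b k0) / 2; set s2 := b k0.
have ha0 := ha k0.
have s1p : 0 < s1 by rewrite /s1; lra.
have s2p : 0 < s2 by rewrite /s2; lra.
have s12 : s1 < s2 by rewrite /s1 /s2; lra.
have as1 : a k0 <= s1 by rewrite /s1; lra.
set e := fun k => 2 ^- k * ((Num.min s2 (b k) - Num.min s1 (b k))
                           - (Num.min s2 (a k) - Num.min s1 (a k))).
have E n : s2 * Fs b s2^-1 n - s1 * Fs b s1^-1 n - (s2 * Fs a s2^-1 n - s1 * Fs a s1^-1 n)
           = \sum_(1 <= k < n) e k.
  rewrite /Fs !mulr_sumr -!sumrB; apply: eq_bigr => k _.
  rewrite /e !(mulrCA s1) !(mulrCA s2) !smin //; ring.
have epos k : (1 <= k)%N -> 0 <= e k.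
  move=> hk; rewrite /e mulr_ge0 ?invr_ge0 ?exprn_ge0 //.
  case: (leqP k k0) => hkk.
    rewrite (@Dzero s1 s2 (a k) (ltW s12)); last by apply: (le_trans _ as1); exact: ma.
    by rewrite subr0; case/andP: (@Dprop s1 s2 (b k) (ltW s12)).
  rewrite (@Dfull s1 s2 (b k) (ltW s12)); last by apply: mb => //; exact: ltnW.
  by rewrite subr_ge0; case/andP: (@Dprop s1 s2 (a k) (ltW s12)).
have ek0 : e k0 = 2 ^- k0 * (s2 - s1).
  by rewrite /e (@Dfull s1 s2 (b k0) (ltW s12)) // (@Dzero s1 s2 (a k0) (ltW s12)) // subr0.
have cv : (fun n => s2 * Fs b s2^-1 n - s1 * Fs b s1^-1 n
                    - (s2 * Fs a s2^-1 n - s1 * Fs a s1^-1 n)) @ \oo -->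
          s2 * limn (Fs b s2^-1) - s1 * limn (Fs b s1^-1)
          - (s2 * limn (Fs a s2^-1) - s1 * limn (Fs a s1^-1)).
  by apply: cvgB; apply: cvgB; apply: cvgMl_tmp; apply: Fs_cvg => //;
    rewrite invr_ge0 ltW.
rewrite !heq ?invr_gt0 // in cv. rewrite subrr in cv.
have : 2 ^- k0 * (s2 - s1) <= 0.
  apply: (cvgr_to_ge cv); exists k0.+1 => // n /= hn.
  by rewrite E -ek0; apply: sum_ge_term.
rewrite pmulr_rle0 ?invr_gt0 ?exprn_gt0 //; lra.
Qed.
End H.

Arguments Fs {R}.
Arguments key {R}.
Arguments Fs_cvg {R}.

Section M.
Variable R : realType.
Variable V : lmodType R.
Variable p : nat -> V -> R.
Hypothesis hX : increasing_frechet_seminorms p.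

Lemma p0 k : (1 <= k)%N -> p k 0 = 0.
Proof.
move=> hk; case: hX => /(_ k hk) [_ hZ] _.
by rewrite -(scale0r (0 : V)) hZ normr0 mul0r.
Qed.

Lemma pge0 k x : (1 <= k)%N -> 0 <= p k x.
Proof.
move=> hk; have := p0 k hk; case: hX => /(_ k hk) [hD hZ] _ h0.
have := hD x (- x); rewrite subrr h0 -scaleN1r hZ normrN normr1 mul1r; lra.
Qed.

Lemma pZ k (t : R) x : (1 <= k)%N -> 0 < t -> p k (t *: x) = t * p k x.
Proof. by move=> hk ht; case: hX => /(_ k hk) [_ hZ] _; rewrite hZ gtr0_norm. Qed.

Lemma pmono i j x : (1 <= i)%N -> (i <= j)%N -> p i x <= p j x.
Proof.
move=> hi; elim: j => [|j IH]; first by rewrite leqn0 => /eqP ji; rewrite ji in hi.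
rewrite leq_eqVlt => /orP[/eqP -> //| hij].
apply: le_trans (IH hij) _; case: hX => _ [hm _]; apply: hm.
exact: leq_trans hi hij.
Qed.

Lemma dist_Fs x (t : R) : 0 < t ->
  frechet_dist p (t *: x) 0 = limn (Fs (fun k => p (maxn k 1) x) t).
Proof.
move=> ht; rewrite /frechet_dist /Fs; congr (limn _); apply/funext => n.
apply: eq_big_nat => k /andP[hk _]; rewrite subr0 pZ //.
by rewrite (elimT maxn_idPl hk).
Qed.
End M.
Arguments pge0 {R V p}.
Arguments pmono {R V p}.
Arguments dist_Fs {R V p}.

Theorem lemma1p1 (R : realType) (V : lmodType R) (p : nat -> V -> R)
  (hX : increasing_frechet_seminorms p) (T : {linear V -> V}) :
  (forall x y : V, frechet_dist p (T x) (T y) = frechet_dist p x y) <->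
  (forall (k : nat) (x : V), (1 <= k)%N -> p k (T x) = p k x).
Proof.
split; last first.
  move=> h x y.
  rewrite /frechet_dist -linearB; congr (limn _); apply/funext => n.
  by apply: eq_big_nat => i /andP[hi _]; rewrite h.
move=> iso k x hk.
set a := fun k => p (maxn k 1) x.
set b := fun k => p (maxn k 1) (T x).
have ha j : 0 <= a j by apply: (pge0 hX); rewrite leq_maxr.
have hb j : 0 <= b j by apply: (pge0 hX); rewrite leq_maxr.
have mono (v : V) i j : (1 <= i)%N -> (i <= j)%N -> p (maxn i 1) v <= p (maxn j 1) v.
  move=> hi hij; rewrite (elimT maxn_idPl hi) (elimT maxn_idPl (leq_trans hi hij)).
  exact: (pmono hX).
have heq t : 0 < t -> limn (Fs a t) = limn (Fs b t).
  move=> ht; rewrite -!(dist_Fs hX) // -(iso (t *: x) 0) linearZ linear0 //.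
have : a k = b k.
  apply/eqP; rewrite eq_le !leNgt; apply/andP; split; apply/negP.
    apply: (key b a) => //; [exact: mono | exact: mono | by move=> t ht; rewrite heq].
  apply: (key a b) => //; [exact: mono | exact: mono].
by rewrite /a /b (elimT maxn_idPl hk) => ->.
Qed.
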